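(* Let $\omega(r)=\frac{r^2}{\sin^2r}-1$ (so $\omega(r)\searrow0$ as $r\searrow0$). Then $u(x)=\sin x$ on $(-\pi/4,\pi/4)$ is a Dirichlet $\omega$-minimizer: for every interval $(x-r,x+r)\subset(-\pi/4,\pi/4)$, $$\int_{x-r}^{x+r}(\cos s)^2\,ds\le(1+\omega(r))\int_{x-r}^{x+r}v'(s)^2\,ds,$$ where $v$ is the affine function with $v(x\pm r)=\sin(x\pm r)$ (the Dirichlet minimizer with these boundary values). *)

(* Defs.v *)
From Stdlib Require Import Reals.
From Coquelicot Require Export Coquelicot.
Export Stdlib.Reals.Reals.
Open Scope R_scope.

Definition omega (r : R) : R := r ^ 2 / (sin r) ^ 2 - 1.

(* Main.v *)
Require Import Defs.
From Stdlib Require Import Reals Lra.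
From Coquelicot Require Import Coquelicot.
Open Scope R_scope.

Lemma cos2_int (L U : R) :
  RInt (fun s => (cos s) ^ 2) L U = (U/2 + sin (2*U)/4) - (L/2 + sin (2*L)/4).
Proof.
  apply is_RInt_unique.
  apply (is_RInt_derive (fun s => s/2 + sin (2*s)/4)).
  - intros y _. auto_derive; auto.
    rewrite cos_2a_cos. field.
  - intros y _. apply (ex_derive_continuous (fun s => cos s ^ 2)).
    auto_derive; auto.
Qed.

Theorem mainTheorem8 :
  forall (x r a b : R),
    0 < r ->
    - PI / 4 <= x - r -> x + r <= PI / 4 ->
    (* v s = a * s + b is the affine function with v(x-r) = sin(x-r), v(x+r) = sin(x+r) *)
    a * (x - r) + b = sin (x - r) ->
    a * (x + r) + b = sin (x + r) ->
    RInt (fun s => (cos s) ^ 2) (x - r) (x + r)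
      <= (1 + omega r) *
         RInt (fun s => (Derive (fun t => a * t + b) s) ^ 2) (x - r) (x + r).
Proof.
  intros x r a b Hr H1 H2 E1 E2.
  rewrite cos2_int.
  rewrite (RInt_ext _ (fun _ => a ^ 2)).
  2:{ intros y _. f_equal. apply is_derive_unique. auto_derive; auto. ring. }
  rewrite RInt_const. unfold scal; simpl; unfold mult; simpl.
  assert (HPI := PI_RGT_0).
  assert (Hs : 0 < sin r) by (apply sin_gt_0; lra).
  assert (Ha : a * r = cos x * sin r).
  { rewrite sin_plus in E2; rewrite sin_minus in E1. nra. }
  assert (Ha' : a = cos x * sin r / r) by (apply (Rmult_eq_reg_r r); [field_simplify; lra|lra] || (field_simplify; lra)).
  unfold omega.
  match goal with |- _ <= ?R => replace R with (2 * r * cos x ^ 2) end.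
  2:{ rewrite Ha'. field. split; lra. }
  replace (2 * (x + r)) with (2*x + 2*r) by ring.
  replace (2 * (x - r)) with (2*x - 2*r) by ring.
  rewrite sin_plus, sin_minus.
  assert (Hc : 0 <= cos (2*x)) by (apply cos_ge_0; lra).
  assert (Hsl : sin (2*r) < 2*r) by (apply sin_lt_x; lra).
  assert (cos (2*x) = 2 * cos x * cos x - 1) by apply cos_2a_cos.
  assert (0 <= cos (2*x) * (2*r - sin (2*r))) by (apply Rmult_le_pos; lra).
  replace (cos x ^ 2) with ((cos (2*x) + 1)/2) by (rewrite H; field).
  lra.
Qed.
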